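(* Let $G$ be a tree on vertex set $[n]$, and let $\mathcal{G}$ be a DAG with skeleton $G$. Let $i$ be an internal (non-leaf) vertex of $G$ and let $T$ be a subtree of $G$. Let $\mathcal{G}'$ be the DAG on vertex set $[n+1]$ obtained from $\mathcal{G}$ by adding the vertex $n+1$ and the edge $i\to n+1$. Let $\mathcal{H}$ and $\mathcal{H}'$ be the directed graphs identical to $\mathcal{G}$ and $\mathcal{G}'$ respectively, except that the direction of every edge of $T$ is reversed. If $\{\mathcal{G},\mathcal{H}\}$ is an essential flip, then $\{\mathcal{G}',\mathcal{H}'\}$ is an essential flip.
   Context: DAG means directed acyclic graph; its skeleton is the undirected graph with the same adjacencies. A v-structure in a DAG is an induced subgraph $a\to b\leftarrow c$ with $a,c$ non-adjacent. Two DAGs are Markov equivalent iff they have the same skeleton and the same v-structures. An edge $a\to b$ of a DAG $\mathcal{D}$ is essential if $a\to b$ appears in every DAG Markov equivalent to $\mathcal{D}$; $a$ is then an essential parent of $b$. The essential graph of $\mathcal{D}$ is the partially directed graph on the skeleton of $\mathcal{D}$ in which essential edges are directed as in $\mathcal{D}$ and all other edges are undirected. The characteristic imset $c_\mathcal{D}$ of a DAG on $[n]$ is the 0/1-vector indexed by $S\subseteq[n]$, $|S|\ge 2$, with $c_\mathcal{D}(S)=1$ iff some $j\in S$ satisfies $S\subseteq \mathrm{pa}_\mathcal{D}(j)\cup\{j\}$. For DAGs $\mathcal{G},\mathcal{H}$ with common skeleton a tree $G$, let $N_j=\{S\cup\{j\}: S\subseteq \mathrm{ne}_G(j),\ |S|\ge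 2\}$ and $\Delta(\mathcal{G},\mathcal{H})=\{j: c_\mathcal{G}|_{N_j}\neq c_\mathcal{H}|_{N_j}\}$ (equivalently, the vertices at which one DAG has a v-structure the other does not). For a set $S$ of vertices of a tree, $\operatorname{span}(S)$ denotes the vertex set of the smallest subtree containing $S$. Two non-Markov-equivalent DAGs (or their essential graphs) $\mathcal{G},\mathcal{H}$ with common tree skeleton $G$ form an essential flip if, writing $\Delta=\Delta(\mathcal{G},\mathcal{H})$, the essential graphs of $\mathcal{G}$ and of $\mathcal{H}$ restricted to $\operatorname{span}(\Delta)$ contain no undirected edges, and every edge of $G|_{\operatorname{span}(\Delta)}$ is directed differently in the essential graphs of $\mathcal{G}$ and $\mathcal{H}$. *)

(* Defs.v *)
(* Vertex set [n] is rendered as 'I_n (0-indexed);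
   the vertex n+1 of [n+1] is ord_max : 'I_n.+1, and an old vertex
   j : 'I_n is embedded as lift ord_max j (same numeric value). *)
From mathcomp Require Import all_boot.
Set Implicit Arguments. Unset Strict Implicit. Unset Printing Implicit Defensive.

Section Graphs.
Variable n : nat.
Local Notation V := ('I_n).

Definition simple_graph (G : rel V) : Prop :=
  (forall x y, G x y = G y x) /\ (forall x, ~~ G x x).

Definition num_edges (G : rel V) : nat :=
  #|[set p : V * V | G p.1 p.2 && (val p.1 < val p.2)]|.

Definition is_tree (G : rel V) : Prop :=
  [/\ simple_graph G, 0 < n, (forall x y, connect G x y) & num_edges G = n.-1].

Definition induced (G : rel V) (U : {set V}) : rel V :=
  fun a b => [&& G a b, a \in U & b \in U].

(* Vertex set of a subtree of the tree G: nonempty and the induced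
   subgraph is connected (in a tree, the edges of a subtree on U are
   exactly the G-edges inside U). *)
Definition is_subtree (G : rel V) (U : {set V}) : bool :=
  (U != set0) && [forall x in U, forall y in U, connect (induced G U) x y].

Definition span (G : rel V) (S : {set V}) : {set V} :=
  [set x | [forall U : {set V}, (S \subset U) ==> 
             (is_subtree G U ==> (x \in U))]].

Definition is_internal (G : rel V) (i : V) : bool := 1 < #|[set j | G i j]|.

(* A directed graph is a relation D : D a b means a -> b. *)
Definition adj (D : rel V) : rel V := fun a b => D a b || D b a.

(* no directed cycle (this also excludes loops and 2-cycles) *)
Definition dag (D : rel V) : Prop := forall x y, D x y -> ~~ connect D y x.

Definition vstruct (D : rel V) (a b c : V) : bool :=
  [&& D a b, D c b, a != c & ~~ adj D a c].

Definition markov_equiv (D1 D2 : rel V) : Prop :=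
  [/\ dag D1, dag D2, (forall a b, adj D1 a b = adj D2 a b) &
      (forall a b c, vstruct D1 a b c = vstruct D2 a b c)].

Definition essential (D : rel V) (a b : V) : Prop :=
  forall D' : rel V, dag D' -> markov_equiv D D' -> D' a b.

(* In the essential graph of D, the edge {a,b} is undirected iff it is
   an edge of the skeleton and neither orientation is essential. *)
Definition eg_undirected (D : rel V) (a b : V) : Prop :=
  adj D a b /\ ~ essential D a b /\ ~ essential D b a.

Definition pa (D : rel V) (j : V) : {set V} := [set k | D k j].

(* c_D(S) = 1 iff some j in S has S \subset pa(j) \cup {j}  (for |S| >= 2) *)
Definition cimset (D : rel V) (S : {set V}) : bool :=
  [exists j in S, S \subset j |: pa D j].

Definition ne (G : rel V) (j : V) : {set V} := [set k | G j k].

Definition Delta (G : rel V) (D1 D2 : rel V) : {set V} :=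
  [set j | [exists S : {set V}, [&& S \subset ne G j, 1 < #|S| &
                                   cimset D1 (j |: S) != cimset D2 (j |: S)]]].

Definition essential_flip (G : rel V) (D1 D2 : rel V) : Prop :=
  [/\ is_tree G, dag D1 /\ dag D2,
      (forall a b, adj D1 a b = G a b) /\ (forall a b, adj D2 a b = G a b),
      ~ markov_equiv D1 D2 &
      forall a b, a \in span G (Delta G D1 D2) -> b \in span G (Delta G D1 D2) -> G a b ->
        [/\ ~ eg_undirected D1 a b, ~ eg_undirected D2 a b &
            ~ ((essential D1 a b <-> essential D2 a b) /\
               (essential D1 b a <-> essential D2 b a))]].

(* Reverse every edge of D with both endpoints in U (the edges of the
   subtree with vertex set U). *)
Definition reverse (D : rel V) (U : {set V}) : rel V :=
  fun a b => if [&& a \in U, b \in U & adj D a b] then D b a else D a b.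

End Graphs.

Definition ext_dag (n : nat) (D : rel 'I_n) (i : 'I_n) : rel 'I_n.+1 :=
  fun x y => match unlift ord_max x, unlift ord_max y with
             | Some a, Some b => D a b
             | Some a, None => a == i
             | _, _ => false
             end.

Definition ext_und (n : nat) (G : rel 'I_n) (i : 'I_n) : rel 'I_n.+1 :=
  fun x y => match unlift ord_max x, unlift ord_max y with
             | Some a, Some b => G a b
             | Some a, None => a == i
             | None, Some b => b == i
             | None, None => false
             end.

(* Main.v *)
Require Import Defs.
From mathcomp Require Import all_boot.
From Stdlib Require Import FunctionalExtensionality.
Set Implicit Arguments. Unset Strict Implicit. Unset Printing Implicit Defensive.

Lemma connect_le (T : finType) (e R : rel T) :
  reflexive R -> transitive R -> subrel e R -> subrel (connect e) R.
Proof.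
move=> Rr Rt sub x y /connectP [p]; elim: p x => [|z p IH] x /=.
  by move=> _ ->; apply: Rr.
by case/andP=> exz pz ly; apply: (Rt z x y (sub _ _ exz) (IH _ pz ly)).
Qed.

Section Ext.
Variable n : nat.
Local Notation lf := (@lift n.+1 ord_max).
Implicit Types (E G : rel 'I_n) (i a b c : 'I_n).

Lemma extE E i a b : ext_dag E i (lf a) (lf b) = E a b.
Proof. by rewrite /ext_dag !liftK. Qed.
Lemma extEm E i a : ext_dag E i (lf a) ord_max = (a == i).
Proof. by rewrite /ext_dag liftK unlift_none. Qed.
Lemma extmE E i y : ext_dag E i ord_max y = false.
Proof. by rewrite /ext_dag unlift_none. Qed.
Lemma undE G i a b : ext_und G i (lf a) (lf b) = G a b.
Proof. by rewrite /ext_und !liftK. Qed.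
Lemma undEm G i a : ext_und G i (lf a) ord_max = (a == i).
Proof. by rewrite /ext_und liftK unlift_none. Qed.
Lemma undmE G i a : ext_und G i ord_max (lf a) = (a == i).
Proof. by rewrite /ext_und liftK unlift_none. Qed.
Lemma undmm G i : ext_und G i ord_max ord_max = false.
Proof. by rewrite /ext_und unlift_none. Qed.

Definition res (E : rel 'I_n.+1) : rel 'I_n := fun a b => E (lf a) (lf b).

Lemma res_ext E i : res (ext_dag E i) = E.
Proof. by do 2 apply: functional_extensionality => ?; rewrite /res extE. Qed.

Lemma lf_inj : injective lf. Proof. exact: lift_inj. Qed.

Lemma dag_res (E : rel 'I_n.+1) : dag E -> dag (res E).
Proof.
move=> dE x y /= Exy; apply/negP => C; move/negP: (dE _ _ Exy); apply.
have H : subrel (connect (res E)) (fun u v => connect E (lf u) (lf v)).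
  apply: connect_le.
  - by move=> ?; apply: connect0.
  - by move=> ? ? ? h1 h2; exact: connect_trans h1 h2.
  - by move=> ? ? h; exact: connect1.
exact: H C.
Qed.

Definition Rx (E : rel 'I_n) (u v : 'I_n.+1) : bool :=
  match unlift ord_max u, unlift ord_max v with
  | Some a, Some b => connect E a b | None, Some _ => false | _, _ => true end.

Lemma dag_ext E i : dag E -> dag (ext_dag E i).
Proof.
move=> dE x y Exy; apply/negP => C.
have : Rx E y x.
  move: C; apply: connect_le.
  - by move=> u; rewrite /Rx; case: (unlift ord_max u).
  - move=> v u w; rewrite /Rx.
    case: (unlift ord_max u) => [a|]; case: (unlift ord_max v) => [b|];
    case: (unlift ord_max w) => [c|] //; exact: connect_trans.
  - move=> u v; rewrite /Rx /ext_dag.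
    case: (unlift ord_max u) => [a|]; case: (unlift ord_max v) => [b|] //.
    exact: connect1.
move: Exy; case: (unliftP ord_max x) => [a ->|->]; last by rewrite extmE.
case: (unliftP ord_max y) => [b ->|->]; rewrite /Rx ?liftK ?unlift_none //.
by rewrite extE => /dE /negP.
Qed.

Lemma adj_ext_l E i a b : adj (ext_dag E i) (lf a) (lf b) = adj E a b.
Proof. by rewrite /adj !extE. Qed.

Lemma vstruct_ext E i x y z :
  vstruct (ext_dag E i) x y z =
  match unlift ord_max x, unlift ord_max y, unlift ord_max z with
  | Some a, Some b, Some c => vstruct E a b c | _, _, _ => false end.
Proof.
case: (unliftP ord_max x) => [a ->|->]; case: (unliftP ord_max y) => [b ->|->];
case: (unliftP ord_max z) => [c ->|->]; rewrite ?liftK ?unlift_none /vstruct ?extmE ?andbF //.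
  by rewrite !extE (inj_eq lf_inj) adj_ext_l.
rewrite !extEm; case: eqP => // ->; case: eqP => // ->.
by rewrite eqxx.
Qed.

Lemma adj_ext E i x y :
  adj (ext_dag E i) x y = ext_und (adj E) i x y.
Proof.
case: (unliftP ord_max x) => [a ->|->]; case: (unliftP ord_max y) => [b ->|->].
- by rewrite adj_ext_l undE.
- by rewrite /adj extEm extmE orbF undEm.
- by rewrite /adj extEm extmE undmE.
- by rewrite /adj extmE undmm.
Qed.

Lemma ME_ext (E1 E2 : rel 'I_n) i : markov_equiv E1 E2 -> markov_equiv (ext_dag E1 i) (ext_dag E2 i).
Proof.
case=> d1 d2 ad vs; split; try exact: dag_ext.
  move=> x y; rewrite !adj_ext.
  case: (unliftP ord_max x) => [a ->|->]; case: (unliftP ord_max y) => [b ->|->];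
  by rewrite ?undE ?undEm ?undmE ?undmm ?ad.
move=> x y z; rewrite !vstruct_ext.
case: (unlift ord_max x) => // a; case: (unlift ord_max y) => // b.
by case: (unlift ord_max z).
Qed.

Lemma ME_res (E1 E2 : rel 'I_n.+1) : markov_equiv E1 E2 -> markov_equiv (res E1) (res E2).
Proof.
case=> d1 d2 ad vs; split; try exact: dag_res.
  by move=> a b; rewrite /adj /res -!/(adj _ _ _) ad.
move=> a b c; have := vs (lf a) (lf b) (lf c).
by rewrite /vstruct /res /adj (inj_eq lf_inj).
Qed.

Lemma ess_ext E i a b : dag E ->
  essential (ext_dag E i) (lf a) (lf b) <-> essential E a b.
Proof.
move=> dE; split.
  move=> es D' dD' me; have := es _ (dag_ext (i:=i) dD') (ME_ext i me).
  by rewrite extE.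
move=> es D' dD' me; have := ME_res me; rewrite res_ext => me'.
exact: (es _ (dag_res dD') me').
Qed.

End Ext.

Lemma card_other (T : finType) (S : {set T}) x :
  1 < #|S| -> exists2 s, s \in S & s != x.
Proof.
move=> h; have : ~~ (S \subset [set x]).
  by apply/negP => /subset_leq_card; rewrite cards1 leqNgt h.
by case/subsetPn => s sS; rewrite inE => ns; exists s.
Qed.

Section Ext2.
Variable n : nat.
Local Notation lf := (@lift n.+1 ord_max).
Implicit Types (E G : rel 'I_n) (i a b c : 'I_n).

Lemma notin_max (X : {set 'I_n}) : ord_max \notin lf @: X.
Proof. by apply/imsetP => -[x _ /eqP]; rewrite (negbTE (neq_lift _ _)). Qed.

Lemma reverse_ext E i (X : {set 'I_n}) :
  reverse (ext_dag E i) (lf @: X) = ext_dag (reverse E X) i.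
Proof.
apply: functional_extensionality => x; apply: functional_extensionality => x0.
case: (unliftP ord_max x) => [a ->|->]; case: (unliftP ord_max x0) => [b ->|->];
rewrite /reverse ?(negbTE (notin_max _)) ?andbF ?extE ?extEm ?extmE //.
by rewrite !(mem_imset _ _ (@lf_inj n)) adj_ext_l.
Qed.

Lemma cimset_lift E i (X : {set 'I_n}) :
  cimset (ext_dag E i) (lf @: X) = cimset E X.
Proof.
rewrite /cimset; apply/exists_inP/exists_inP.
  case=> j' /imsetP[j jX ->] /subsetP sub; exists j => //; apply/subsetP => x xX.
  by have := sub (lf x) (imset_f lf xX); rewrite !inE extE (inj_eq (@lf_inj n)).
case=> j jX /subsetP sub; exists (lf j); first exact: imset_f.
apply/subsetP => x' /imsetP[x xX ->]; have := sub x xX.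
by rewrite !inE extE (inj_eq (@lf_inj n)).
Qed.

Lemma cimset_zero E i k (S : {set 'I_n.+1}) :
  k != i -> ord_max \in S -> lf k \in S -> cimset (ext_dag E i) (lf i |: S) = false.
Proof.
move=> ki mS kS; apply/exists_inP => -[j' _ /subsetP sub].
case: (unliftP ord_max j') => [m ->|-> ] in sub.
  have := sub ord_max; rewrite !inE mS orbT extmE orbF.
  by rewrite (negbTE (neq_lift _ _)) => /(_ isT).
have := sub (lf k); rewrite !inE kS orbT extEm eq_sym.
by rewrite (negbTE (neq_lift _ _)) (negbTE ki) => /(_ isT).
Qed.

Lemma Delta_sub G E1 E2 i : (forall x, ~~ G x x) ->
  Delta (ext_und G i) (ext_dag E1 i) (ext_dag E2 i) \subset lf @: Delta G E1 E2.
Proof.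
move=> irr; apply/subsetP => j'; rewrite inE => /existsP[S' /and3P[sub card neq]].
case: (unliftP ord_max j') => [j ->|-> ] in sub neq *; last first.
  have [s sS ns] := card_other (lf i) card.
  have := subsetP sub s sS; rewrite inE.
  case: (unliftP ord_max s) => [b ->|->] in ns *; rewrite ?undmE ?undmm //.
  by move/eqP => bi; rewrite bi eqxx in ns.
case: (boolP (ord_max \in S')) => mS.
  have /eqP ji : j == i by have := subsetP sub _ mS; rewrite inE undEm.
  subst j.
  have [s sS ns] := card_other ord_max card.
  case: (unliftP ord_max s) => [k ->|->] in sS ns; last by rewrite eqxx in ns.
  have := subsetP sub _ sS; rewrite inE undE => Gik.
  have ki : k != i by apply/eqP => ki; subst k; rewrite (negbTE (irr i)) in Gik.
  by rewrite !(cimset_zero _ ki mS sS) in neq.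
set S0 := [set x | lf x \in S'].
have eS : S' = lf @: S0.
  apply/setP => x; case: (unliftP ord_max x) => [b ->|->].
    by rewrite (mem_imset _ _ (@lf_inj n)) inE.
  by rewrite (negbTE mS) (negbTE (notin_max _)).
rewrite eS -imsetU1 !cimset_lift in neq.
rewrite eS card_imset in card; last exact: lf_inj.
rewrite (mem_imset _ _ (@lf_inj n)) inE; apply/existsP; exists S0.
rewrite card neq !andbT; apply/subsetP => x xS0.
have := subsetP sub (lf x); rewrite !inE undE; apply; rewrite eS (mem_imset _ _ (@lf_inj n)) //.
Qed.

Lemma subtree_lift G i (U : {set 'I_n}) :
  is_subtree G U -> is_subtree (ext_und G i) (lf @: U).
Proof.
move=> /andP[/set0Pn[u uU] /forall_inP cU]; apply/andP; split.
  by apply/set0Pn; exists (lf u); exact: imset_f.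
apply/forall_inP => x /imsetP[a aU ->]; apply/forall_inP => y /imsetP[b bU ->].
move/forall_inP: (cU a aU) => /(_ b bU).
have H : subrel (connect (induced G U))
   (fun u v => connect (induced (ext_und G i) (lf @: U)) (lf u) (lf v)).
  apply: connect_le.
  - by move=> ?; apply: connect0.
  - by move=> ? ? ? h1 h2; exact: connect_trans h1 h2.
  - move=> u1 v1 h; apply: connect1; move: h.
    by rewrite /induced undE !(mem_imset _ _ (@lf_inj n)).
exact: H.
Qed.

Lemma subtree_setT G : is_tree G -> is_subtree G [set: 'I_n].
Proof.
case=> _ n0 cG _; apply/andP; split.
  by apply/set0Pn; exists (Ordinal n0); rewrite inE.
apply/forall_inP => x _; apply/forall_inP => y _.
have -> : connect (induced G setT) x y = connect G x y.
  by apply: eq_connect => a b; rewrite /induced !inE !andbT.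
exact: cG.
Qed.

Lemma span_sub G i0 (S : {set 'I_n}) (S' : {set 'I_n.+1}) x : is_tree G ->
  S' \subset lf @: S -> x \in span (ext_und G i0) S' ->
  exists2 x0, x = lf x0 & x0 \in span G S.
Proof.
move=> tG sS; rewrite inE => /forallP h.
have key : forall U : {set 'I_n}, S \subset U -> is_subtree G U -> x \in lf @: U.
  move=> U sU tU; have := h (lf @: U).
  by rewrite (subset_trans sS (imsetS _ sU)) (subtree_lift i0 tU).
have /imsetP[x0 _ ex] := key _ (subsetT S) (subtree_setT tG); subst x.
exists x0 => //; rewrite inE; apply/forallP => U; apply/implyP => sU.
apply/implyP => tU; have := key U sU tU.
by rewrite (mem_imset _ _ (@lf_inj n)).
Qed.

Lemma num_edges_ext G i : num_edges (ext_und G i) = (num_edges G).+1.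
Proof.
rewrite /num_edges.
set S0 := [set p : 'I_n * 'I_n | G p.1 p.2 && (val p.1 < val p.2)].
pose f (p : 'I_n * 'I_n) := (lf p.1, lf p.2).
have finj : injective f.
  move=> [a b] [c d] h; have h1 : lf a = lf c := congr1 fst h.
  have h2 : lf b = lf d := congr1 snd h.
  by rewrite (lift_inj h1) (lift_inj h2).
have nimg : forall p : 'I_n.+1 * 'I_n.+1,
    (p.1 == ord_max) || (p.2 == ord_max) -> p \notin f @: S0.
  move=> p h; apply/imsetP => -[q _ ep]; move: h; rewrite ep /=.
  by rewrite !(eq_sym _ ord_max) !(negbTE (neq_lift _ _)).
have -> : [set p : 'I_n.+1 * 'I_n.+1 | ext_und G i p.1 p.2 && (val p.1 < val p.2)]
    = (lf i, ord_max) |: f @: S0.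
  apply/setP => -[x y]; rewrite !inE /=.
  case: (unliftP ord_max x) => [a ->|->]; case: (unliftP ord_max y) => [b ->|->].
  - rewrite undE !lift_max xpair_eqE (eq_sym _ ord_max) (negbTE (neq_lift _ _)) andbF /=.
    have -> : (lf a, lf b) = f (a, b) by [].
    by rewrite (mem_imset _ _ finj) inE.
  - rewrite undEm lift_max /= ltn_ord andbT xpair_eqE eqxx andbT (inj_eq (@lf_inj n)).
    by rewrite (negbTE (nimg (lf a, ord_max) _)) ?orbF //= eqxx orbT.
  - rewrite undmE; have -> : ((@ord_max n : nat) < lf b) = false.
      by apply: negbTE; rewrite -leqNgt; exact: leq_ord.
    rewrite andbF xpair_eqE.
    by rewrite (negbTE (neq_lift _ _)) (negbTE (nimg (ord_max, lf b) _)) //= eqxx.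
  - rewrite undmm xpair_eqE (negbTE (neq_lift _ _)) /=.
    by rewrite (negbTE (nimg (ord_max, ord_max) _)) //= eqxx.
by rewrite cardsU1 card_imset // (nimg (lf i, ord_max)) // /= eqxx orbT.
Qed.

Lemma tree_ext G i : is_tree G -> is_tree (ext_und G i).
Proof.
case=> [[sym irr] n0 cG ne].
have sym' : forall x y, ext_und G i x y = ext_und G i y x.
  move=> x y; case: (unliftP ord_max x) => [a ->|->];
  case: (unliftP ord_max y) => [b ->|->];
  rewrite ?undE ?undEm ?undmE ?undmm //; exact: sym.
split => //.
- split => // x; case: (unliftP ord_max x) => [a ->|->];
  by rewrite ?undE ?undmm ?irr.
- have toi : forall x, connect (ext_und G i) x (lf i).
    move=> x; case: (unliftP ord_max x) => [a ->|->]; last first.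
      by apply: connect1; rewrite undmE.
    have H : subrel (connect G) (fun u v => connect (ext_und G i) (lf u) (lf v)).
      apply: connect_le.
      - by move=> ?; apply: connect0.
      - by move=> ? ? ? h1 h2; exact: connect_trans h1 h2.
      - by move=> u1 v1 h; apply: connect1; rewrite undE.
    exact: H.
  move=> x y; apply: connect_trans (toi x) _.
  by rewrite (sym_connect_sym sym'); apply: toi.
- by rewrite num_edges_ext ne prednK.
Qed.

End Ext2.

Unset Implicit Arguments.

Theorem mainTheorem3 (n : nat) (G D : rel 'I_n) (i : 'I_n) (T : {set 'I_n}) :
  is_tree G ->
  dag D ->
  (forall a b, adj D a b = G a b) ->
  is_internal G i ->
  is_subtree G T ->
  essential_flip G D (reverse D T) ->
  essential_flip (ext_und G i) (ext_dag D i)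
                 (reverse (ext_dag D i) (lift ord_max @: T)).
Proof.
move=> tG dD adG _ _ [_ [_ dH] [_ adH] nME fl].
rewrite reverse_ext; set H := reverse D T in dH adH nME fl *.
have irr : forall x, ~~ G x x by case: tG => -[].
have Dsub := Delta_sub D H i irr.
have eD : adj D = G by do 2 apply: functional_extensionality => ?; rewrite adG.
have eH : adj H = G.
  by apply: functional_extensionality => x; apply: functional_extensionality => y; rewrite adH.
split.
- exact: tree_ext.
- by split; apply: dag_ext.
- by split => a b; rewrite adj_ext ?eD ?eH.
- by move=> me; apply: nME; have := ME_res me; rewrite !res_ext.
move=> a b aS bS Gab.
have [a0 ea a0S] := span_sub tG Dsub aS.
have [b0 eb b0S] := span_sub tG Dsub bS.
subst a b; rewrite undE in Gab.
have [h1 h2 h3] := fl _ _ a0S b0S Gab.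
rewrite /eg_undirected in h1 h2 *.
rewrite !adj_ext_l.
have := @ess_ext n D i a0 b0 dD; have := @ess_ext n D i b0 a0 dD.
have := @ess_ext n H i a0 b0 dH; have := @ess_ext n H i b0 a0 dH.
move=> e1 e2 e3 e4; split; tauto.
Qed.
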